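(* Let $d\ge2$, $\Lambda_1,\ldots,\Lambda_d\in\mathcal{M}_2$ and let $C$ be a $d$-copula which is negatively quadrant dependent, i.e. $C(\mathbf{u})\le\Pi(\mathbf{u}):=\prod_{i=1}^du_i$ for all $\mathbf{u}\in[0,1]^d$. Then for every $k=1,\ldots,d$ and $\mathbf{w}\in\mathbb{R}_+^d$, $$\phi_C(\Lambda_1,\ldots,\Lambda_d)(\mathbf{w})\le\phi_\Pi(\Lambda_1,\ldots,\Lambda_d)(\mathbf{w})\le\min_{m\in\{1,\ldots,d\},\,m\neq k}\Lambda_k(w_m,w_k).$$
   Context: A $d$-copula is a distribution function on $[0,1]^d$ with uniform margins. $\mathcal{M}_2$ is the set of bivariate tail dependence functions $\Lambda(\mathbf{w};D)=\lim_{s\searrow0}D(s\mathbf{w})/s$ of $2$-copulas $D$ (defined on $\mathbb{R}_+^2$, $\mathbb{R}_+=[0,\infty)$); they are $1$-Lipschitz and concave with a.e. partial derivatives in $[0,1]$. For a $d$-copula $C$, $\phi_C(\Lambda_1,\ldots,\Lambda_d)(w_1,\ldots,w_d):=\int_0^\infty C(\partial_1\Lambda_1(t,w_1),\ldots,\partial_1\Lambda_d(t,w_d))\,dt$. *)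

(* Defs.v *)
From HB Require Import structures.
From mathcomp Require Import all_boot all_order all_algebra.
From mathcomp Require Import all_classical all_reals all_analysis.
Set Implicit Arguments. Unset Strict Implicit. Unset Printing Implicit Defensive.
Import Order.TTheory GRing.Theory Num.Theory.
Import numFieldNormedType.Exports.
Local Open Scope classical_set_scope.
Local Open Scope ring_scope.

Section Defs.
Variable R : realType.

Definition in_unit_cube (d : nat) (u : 'I_d -> R) : Prop :=
  forall i, 0 <= u i <= 1.

(* Values outside [0,1]^d are irrelevant. *)
Definition is_copula (d : nat) (C : ('I_d -> R) -> R) : Prop :=
  (forall u, in_unit_cube u -> (exists i, u i = 0) -> C u = 0) /\
  (forall u i, in_unit_cube u -> (forall j, j != i -> u j = 1) -> C u = u i) /\
  (* d-increasing: nonnegative C-volume of every box [a,b] in [0,1]^d *)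
  (forall a b, in_unit_cube a -> in_unit_cube b -> (forall i, a i <= b i) ->
     0 <= \sum_(S : {set 'I_d})
            (-1) ^+ #|S| * C (fun i => if i \in S then a i else b i)).

Definition Pi_cop (d : nat) (u : 'I_d -> R) : R := \prod_(i < d) u i.

Definition pt2 (x y : R) : 'I_2 -> R := fun i => if i == ord0 then x else y.

(* Lambda : R_+^2 -> R (given as a function on R x R, only its values on
   R_+^2 matter) belongs to M_2: it is the tail dependence function of some
   2-copula D, Lambda(w) = lim_{s -> 0+} D(s w)/s for all w in R_+^2. *)
Definition in_M2 (L : R -> R -> R) : Prop :=
  exists D : ('I_2 -> R) -> R, is_copula D /\
    forall w1 w2 : R, 0 <= w1 -> 0 <= w2 ->
      (fun s => D (pt2 (s * w1) (s * w2)) / s) @ 0^'+ --> L w1 w2.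

(* partial derivative of L in its first argument, taken as the right
   derivative (which exists everywhere on R_+ for L in M_2 and agrees with
   the a.e. partial derivative except on a countable set of t). *)
Definition d1 (L : R -> R -> R) (t w : R) : R :=
  lim ((fun h => (L (t + h) w - L t w) / h) @ 0^'+).

Definition phi (d : nat) (C : ('I_d -> R) -> R) (Ls : 'I_d -> R -> R -> R)
  (w : 'I_d -> R) : \bar R :=
  (\int[@lebesgue_measure R]_(t in `[(0:R)%R, +oo[%classic)
      (C (fun i => d1 (Ls i) t (w i)))%:E)%E.

End Defs.

(* Main.v *)
Require Import Defs.
From HB Require Import structures.
From mathcomp Require Import all_boot all_order all_algebra.
From mathcomp Require Import all_classical all_reals all_analysis.
From mathcomp Require Import lra ring measurable_realfun.
Import Order.TTheory GRing.Theory Num.Theory.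
Import numFieldNormedType.Exports.
Local Open Scope ring_scope.

Section Cop2.
Variable R : realType.

Lemma ord2P (i : 'I_2) : i = ord0 \/ i = ord_max.
Proof. by case: i => [[|[|//]]] Hi; [left|right]; apply: val_inj. Qed.

Lemma set2P (S : {set 'I_2}) :
  S = finset.set0 \/ S = [set ord0] \/ S = [set ord_max] \/ S = finset.setT.
Proof.
have h0 := ord2P.
case: (boolP (ord0 \in S)) => h1; case: (boolP (ord_max \in S)) => h2.
- right; right; right; apply/setP => i; rewrite finset.in_setT.
  by case: (h0 i) => ->.
- right; left; apply/setP => i; rewrite finset.in_set1.
  by case: (h0 i) => ->; [rewrite h1| rewrite (negbTE h2)].
- right; right; left; apply/setP => i; rewrite finset.in_set1.
  by case: (h0 i) => ->; [rewrite (negbTE h1)| rewrite h2].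
- left; apply/setP => i; rewrite finset.in_set0.
  by case: (h0 i) => ->; [rewrite (negbTE h1)| rewrite (negbTE h2)].
Qed.

Lemma sum_set2 (F : {set 'I_2} -> R) :
  \sum_(S : {set 'I_2}) F S = F finset.set0 + F [set ord0] + F [set ord_max] + F finset.setT.
Proof.
have n01 : [set ord0] != [set ord_max :> 'I_2].
  by apply/negP => /eqP/setP/(_ ord0); rewrite !finset.in_set1.
have n0T : [set ord0] != [set: 'I_2].
  by apply/negP => /eqP/setP/(_ ord_max); rewrite !finset.in_set1 finset.in_setT.
have n1T : [set ord_max] != [set: 'I_2].
  by apply/negP => /eqP/setP/(_ ord0); rewrite !finset.in_set1 finset.in_setT.
have e0 : forall A : {set 'I_2}, A != finset.set0 -> A != finset.set0 by [].
rewrite (bigD1 finset.set0) //= (bigD1 [set ord0]) /=; last first.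
  by apply/negP => /eqP/setP/(_ ord0); rewrite finset.in_set0 finset.in_set1.
rewrite (bigD1 [set ord_max]) /=; last first.
  rewrite (eq_sym [set ord_max] [set ord0]) n01 andbT.
  by apply/negP => /eqP/setP/(_ ord_max); rewrite finset.in_set0 finset.in_set1.
rewrite (bigD1 finset.setT) /=; last first.
  rewrite (eq_sym [set: _] [set ord_max]) n1T (eq_sym [set: _] [set ord0]) n0T !andbT.
  by apply/negP => /eqP/setP/(_ ord_max); rewrite finset.in_set0 finset.in_setT.
rewrite big_pred0 ?addr0 ?addrA //.
move=> S; case: (set2P S) => [->|[->|[->|->]]]; by rewrite eqxx /= ?andbF.
Qed.

Variable D : ('I_2 -> R) -> R.
Hypothesis hD : is_copula D.

Local Notation P := (@pt2 R).

Lemma cube2 u v : 0 <= u <= 1 -> 0 <= v <= 1 -> in_unit_cube (P u v).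
Proof. by move=> hu hv i; rewrite /pt2; case: (i == ord0). Qed.

Lemma vol2 u1 u2 v1 v2 : 0 <= u1 -> u1 <= u2 -> u2 <= 1 ->
  0 <= v1 -> v1 <= v2 -> v2 <= 1 ->
  0 <= D (P u2 v2) - D (P u1 v2) - D (P u2 v1) + D (P u1 v1).
Proof.
move=> h1 h2 h3 h4 h5 h6.
have c1 : in_unit_cube (P u1 v1).
  by apply: cube2; [rewrite h1 (le_trans h2 h3) | rewrite h4 (le_trans h5 h6)].
have c2 : in_unit_cube (P u2 v2).
  by apply: cube2; [rewrite h3 (le_trans h1 h2) | rewrite h6 (le_trans h4 h5)].
have hab : forall i, P u1 v1 i <= P u2 v2 i by move=> i; rewrite /pt2; case: (i == ord0).
have := hD.2.2 _ _ c1 c2 hab; rewrite sum_set2.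
rewrite cards0 cards1 cardsT card_ord !expr0 !expr1 mul1r.
have -> : (fun i => if i \in finset.set0 then P u1 v1 i else P u2 v2 i) = P u2 v2.
  by apply: funext => i; rewrite finset.in_set0.
have -> : (fun i => if i \in [set ord0] then P u1 v1 i else P u2 v2 i) = P u1 v2.
  by apply: funext => i; rewrite finset.in_set1 /pt2; case: (i == ord0).
have -> : (fun i => if i \in [set ord_max] then P u1 v1 i else P u2 v2 i) = P u2 v1.
  apply: funext => i; rewrite finset.in_set1 /pt2; case: (ord2P i) => -> //.
have -> : (fun i => if i \in [set: 'I_2] then P u1 v1 i else P u2 v2 i) = P u1 v1.
  by apply: funext => i; rewrite finset.in_setT.
by rewrite cards1 expr1 sqrrN expr1n mul1r !mulN1r.
Qed.

Lemma D_u0 u : 0 <= u <= 1 -> D (P u 0) = 0.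
Proof.
move=> hu; apply: hD.1; first by apply: cube2 => //; rewrite lexx ler01.
by exists ord_max.
Qed.

Lemma D_0v v : 0 <= v <= 1 -> D (P 0 v) = 0.
Proof.
move=> hv; apply: hD.1; first by apply: cube2 => //; rewrite lexx ler01.
by exists ord0.
Qed.

Lemma D_u1 u : 0 <= u <= 1 -> D (P u 1) = u.
Proof.
move=> hu; rewrite (hD.2.1 _ ord0) //; first by apply: cube2 => //; rewrite ler01 lexx.
by move=> j; case: (ord2P j) => -> //.
Qed.

Lemma D_1v v : 0 <= v <= 1 -> D (P 1 v) = v.
Proof.
move=> hv; rewrite (hD.2.1 _ ord_max) //; first by apply: cube2 => //; rewrite ler01 lexx.
by move=> j; case: (ord2P j) => -> //.
Qed.

Lemma D_lip u1 u2 v : 0 <= u1 -> u1 <= u2 -> u2 <= 1 -> 0 <= v <= 1 ->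
  0 <= D (P u2 v) - D (P u1 v) <= u2 - u1.
Proof.
move=> h1 h2 h3 /andP[h4 h5].
have hu1 : 0 <= u1 <= 1 by rewrite h1 (le_trans h2 h3).
have hu2 : 0 <= u2 <= 1 by rewrite h3 (le_trans h1 h2).
have := vol2 _ _ _ _ h1 h2 h3 (lexx 0) h4 h5.
have := vol2 _ _ _ _ h1 h2 h3 h4 h5 (lexx 1).
rewrite !D_u0 // !D_u1 //; move=> a b; apply/andP; split; lra.
Qed.

Lemma D_le_v u v : 0 <= u <= 1 -> 0 <= v <= 1 -> D (P u v) <= v.
Proof.
move=> /andP[h1 h2] /andP[h4 h5].
have := vol2 _ _ _ _ h1 h2 (lexx 1) (lexx 0) h4 h5.
have hu : 0 <= u <= 1 by rewrite h1 h2.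
have hv : 0 <= v <= 1 by rewrite h4 h5.
have h01 : 0 <= (1:R) <= 1 by apply/andP; split; [exact: ler01|exact: lexx].
rewrite !D_u0 // D_1v //; lra.
Qed.

Lemma D_ge0 u v : 0 <= u <= 1 -> 0 <= v <= 1 -> 0 <= D (P u v).
Proof.
move=> /andP[h1 h2] /andP[h4 h5].
have := vol2 _ _ _ _ (lexx 0) h1 h2 (lexx 0) h4 h5.
have hu : 0 <= u <= 1 by rewrite h1 h2.
have hv : 0 <= v <= 1 by rewrite h4 h5.
have h00 : 0 <= (0:R) <= 1 by apply/andP; split; [exact: lexx|exact: ler01].
rewrite !D_u0 // D_0v //; lra.
Qed.

End Cop2.

Local Open Scope classical_set_scope.

Section LamProps.
Variable R : realType.
Local Notation P := (@pt2 R).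

Lemma scale_at_right (c : R) : 0 < c -> (fun s => c * s) @ 0^'+ --> (0:R)^'+.
Proof.
move=> c0 A /=.
move=> [e /= e0 He]. exists (e / c) => /=; first by rewrite divr_gt0.
move=> s /= hs s0. apply: He => /=; last by rewrite mulr_gt0.
rewrite !sub0r !normrN in hs *. rewrite normrM (gtr0_norm c0).
by rewrite mulrC -ltr_pdivlMr.
Qed.

Lemma near_small (M : R) : 0 <= M -> \forall s \near (0:R)^'+, 0 < s /\ s * M <= 1.
Proof.
move=> M0; exists (1 / (M + 1)) => /=; first by rewrite divr_gt0 // ltr_wpDl.
move=> s /= hs s0; split => //.
rewrite sub0r normrN gtr0_norm // in hs.
have M1 : 0 < M + 1 by rewrite ltr_wpDl.
rewrite ltr_pdivlMr // in hs. nra.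
Qed.

Lemma near_lt (M : R) : 0 < M -> \forall s \near (0:R)^'+, 0 < s /\ s < M.
Proof.
move=> M0; exists M => //= s /= hs s0; split => //.
by rewrite sub0r normrN gtr0_norm // in hs.
Qed.

Lemma lim_geP (f : R -> R) l a : f @ 0^'+ --> l ->
  (\forall s \near (0:R)^'+, a <= f s) -> a <= l.
Proof.
move=> fl H; rewrite -(cvg_lim _ fl) //; apply: limr_ge => //.
by apply/cvg_ex; exists l.
Qed.

Lemma lim_leP (f : R -> R) l a : f @ 0^'+ --> l ->
  (\forall s \near (0:R)^'+, f s <= a) -> l <= a.
Proof.
move=> fl H; rewrite -(cvg_lim _ fl) //; apply: limr_le => //.
by apply/cvg_ex; exists l.
Qed.

Variable L : R -> R -> R.
Variable D : ('I_2 -> R) -> R.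
Hypothesis hD : is_copula D.
Hypothesis hlim : forall w1 w2 : R, 0 <= w1 -> 0 <= w2 ->
      (fun s => D (pt2 (s * w1) (s * w2)) / s) @ 0^'+ --> L w1 w2.

Lemma L_lip x1 x2 y : 0 <= x1 -> x1 <= x2 -> 0 <= y ->
  0 <= L x2 y - L x1 y <= x2 - x1.
Proof.
move=> h1 h2 hy.
have x20 : 0 <= x2 by exact: le_trans h2.
have h : (fun s => D (P (s*x2) (s*y))/s - D (P (s*x1) (s*y))/s) @ 0^'+ -->
   L x2 y - L x1 y by apply: cvgB; apply: hlim.
have M0 : 0 <= x2 + y by rewrite addr_ge0.
apply/andP; split.
- apply: lim_geP; first exact: h.
  apply: filterS (near_small _ M0) => s [s0 sM] /=.
  have := @D_lip R D hD (s * x1) (s * x2) (s * y).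
  case/(_ _ _ _ _)/andP; [nra|nra|nra|nra|] => a b.
  by rewrite -mulrBl; apply: divr_ge0 => //; exact: ltW.
- apply: lim_leP; first exact: h.
  apply: filterS (near_small _ M0) => s [s0 sM] /=.
  have := @D_lip R D hD (s * x1) (s * x2) (s * y).
  case/(_ _ _ _ _)/andP; [nra|nra|nra|nra|] => a b.
  by rewrite -mulrBl ler_pdivrMr //; nra.
Qed.


Lemma L_bnd x y : 0 <= x -> 0 <= y -> 0 <= L x y <= y.
Proof.
move=> hx hy; have M0 : 0 <= x + y by rewrite addr_ge0.
apply/andP; split.
- apply: lim_geP; first exact: hlim.
  apply: filterS (near_small _ M0) => s [s0 sM] /=.
  apply: divr_ge0; last exact: ltW.
  by apply: (@D_ge0 R D hD); apply/andP; split; nra.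
- apply: lim_leP; first exact: hlim.
  apply: filterS (near_small _ M0) => s [s0 sM] /=.
  rewrite ler_pdivrMr // [y * s]mulrC.
  by apply: (@D_le_v R D hD); apply/andP; split; nra.
Qed.

Lemma L_0 y : 0 <= y -> L 0 y = 0.
Proof.
move=> hy; have M0 : 0 <= y by [].
apply/eqP; rewrite eq_le; apply/andP; split.
- apply: lim_leP; first exact: hlim.
  apply: filterS (near_small _ M0) => s [s0 sM] /=.
  by rewrite mulr0 (@D_0v R D hD) ?mul0r //; apply/andP; split; nra.
- apply: lim_geP; first exact: hlim.
  apply: filterS (near_small _ M0) => s [s0 sM] /=.
  by rewrite mulr0 (@D_0v R D hD) ?mul0r //; apply/andP; split; nra.
Qed.

Lemma L_supermod x1 x2 y1 y2 : 0 <= x1 -> x1 <= x2 -> 0 <= y1 -> y1 <= y2 ->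
  0 <= L x2 y2 - L x1 y2 - L x2 y1 + L x1 y1.
Proof.
move=> h1 h2 h3 h4.
have x20 : 0 <= x2 by exact: le_trans h2.
have y20 : 0 <= y2 by exact: le_trans h4.
have h : (fun s => D (P (s*x2) (s*y2))/s - D (P (s*x1) (s*y2))/s
   - D (P (s*x2) (s*y1))/s + D (P (s*x1) (s*y1))/s) @ 0^'+ -->
   L x2 y2 - L x1 y2 - L x2 y1 + L x1 y1.
  by apply: cvgD; [apply: cvgB; [apply: cvgB|]|]; apply: hlim.
have M0 : 0 <= x2 + y2 by rewrite addr_ge0.
apply: lim_geP; first exact: h.
apply: filterS (near_small _ M0) => s [s0 sM] /=.
have := @vol2 R D hD (s * x1) (s * x2) (s * y1) (s * y2).
move/(_ _ _ _ _ _ _) => H.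
have {H} H := H ltac:(nra) ltac:(nra) ltac:(nra) ltac:(nra) ltac:(nra) ltac:(nra).
by rewrite -!mulrBl -mulrDl; apply: divr_ge0 => //; exact: ltW.
Qed.

Lemma L_hom c x y : 0 < c -> 0 <= x -> 0 <= y -> L (c * x) (c * y) = c * L x y.
Proof.
move=> c0 hx hy.
have h1 := hlim _ _ (mulr_ge0 (ltW c0) hx) (mulr_ge0 (ltW c0) hy).
have h2 : (fun s => c * (D (P ((c * s) * x) ((c * s) * y)) / (c * s))) @ 0^'+ --> c * L x y.
  apply: cvgM; first exact: cvg_cst.
  exact: (cvg_comp _ _ (scale_at_right _ c0) (hlim _ _ hx hy)).
have e : (fun s => c * (D (P ((c * s) * x) ((c * s) * y)) / (c * s))) =
    (fun s => D (P (s * (c * x)) (s * (c * y))) / s).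
  apply: funext => s.
  have -> : c * s * x = s * (c * x) by ring.
  have -> : c * s * y = s * (c * y) by ring.
  set X := D _.
  have cn : c != 0 by rewrite gt_eqF.
  have [->|sn] := eqVneq s 0; first by rewrite !mulr0 !invr0 !mulr0.
  by field; rewrite cn sn.
rewrite e in h2.
exact: (cvg_unique _ h1 h2).
Qed.

End LamProps.

Section Conc.
Variable R : realType.
Variable F : R -> R.
Hypothesis F_lip : forall x1 x2, 0 <= x1 -> x1 <= x2 -> 0 <= F x2 - F x1 <= x2 - x1.
Hypothesis F_geo : forall m r, 0 < m -> 1 <= r ->
  F (m * r) + r * F (m / r) <= (1 + r) * F m.

Let Ft x := F (Num.max x 0).

Let Ft_lip x y : `|Ft x - Ft y| <= `|x - y|.
Proof.
rewrite /Ft.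
wlog xy : x y / x <= y.
  move=> H; case: (leP x y) => [/H//|/ltW /H]; by rewrite distrC [`|y - x|]distrC.
have h1 : Num.max x 0 <= Num.max y 0.
  by rewrite ge_max !le_max lexx xy orbT.
have h0 : 0 <= Num.max x 0 by rewrite le_max lexx orbT.
have /andP[a b] := F_lip _ _ h0 h1.
rewrite distrC (ger0_norm a) distrC (ger0_norm); last by rewrite subr_ge0.
apply: (le_trans b).
case: (leP x 0) => hx; case: (leP y 0) => hy.
all: lra.
Qed.

Let Ft_cont : continuous Ft.
Proof.
move=> x; apply/cvgrPdist_lt => e e0.
near=> y; apply: (le_lt_trans (Ft_lip x y)).
near: y. first [ exact: (cvgr_dist_lt (@cvg_id _ (nbhs x)) e0) | exact: (cvgr_dist_lt cvg_id e0) | exact: (cvgr_dist_lt (cvg_refl _) e0) | (apply: cvgr_dist_lt => //) ].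
Unshelve. all: by end_near.
Qed.


Lemma F_conc p q s : 0 <= p -> p < q -> q < s ->
  (s - q) * F p + (q - p) * F s <= (s - p) * F q.
Proof.
move=> p0 pq qs.
set b := p; set a := s.
have ba : b < a by exact: lt_trans qs.
have abn : a - b != 0 by rewrite subr_eq0 gt_eqF.
set beta := (Ft a - Ft b) / (a - b).
pose E e x := Ft x - (Ft b + beta * (x - b)) + e * ((x - b) * (a - x)).
have Ecomp e x : b <= x -> E e x = F x - (F b + beta * (x - b)) + e * ((x - b) * (a - x)).
  move=> bx; rewrite /E /Ft (max_l (le_trans p0 bx)) (max_l p0) //.
have key : forall e, 0 < e -> forall x, b <= x <= a -> 0 <= E e x.
  move=> e e0.
  have Ec : continuous (E e).
    move=> x; rewrite /E.
    apply: cvgD; first apply: cvgB.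
    - exact: Ft_cont.
    - apply: cvgD; first exact: cvg_cst.
      apply: cvgM; first exact: cvg_cst.
      apply: cvgB; [exact: cvg_id | exact: cvg_cst].
    - apply: cvgM; first exact: cvg_cst.
      apply: cvgM; apply: cvgB; (exact: cvg_id || exact: cvg_cst).
  have [c hc hmin] := EVT_min (ltW ba) (continuous_subspaceT Ec).
  have Eb : E e b = 0 by rewrite /E !subrr !mulr0 !mul0r; ring.
  have Ea : E e a = 0.
    rewrite /E subrr !mulr0 /beta; field; exact: abn.
  move=> x hx.
  have := hmin x; rewrite in_itv /= => /(_ hx) Ecx.
  apply: le_trans Ecx.
  move: hc; rewrite in_itv /= => /andP[bc ca].
  case: (eqVneq c b) => [->|cb]; first by rewrite Eb.
  case: (eqVneq c a) => [->|can]; first by rewrite Ea.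
  have bc' : b < c by rewrite lt_neqAle eq_sym cb bc.
  have ca' : c < a by rewrite lt_neqAle can ca.
  exfalso.
  have c0 : 0 < c by exact: le_lt_trans p0 bc'.
  set r := Num.min (a / c) (2 * c / (b + c)).
  have bc0 : 0 < b + c by rewrite ltr_wpDl.
  have r1 : 1 < r.
    rewrite lt_min; apply/andP; split.
    - by rewrite ltr_pdivlMr // mul1r.
    - rewrite ltr_pdivlMr // mul1r; lra.
  have r0 : 0 < r by exact: lt_trans r1.
  have rle1 : r <= a / c by rewrite ge_min lexx.
  have rle2 : r <= 2 * c / (b + c) by rewrite ge_min lexx orbT.
  set u := c * r; set v := c / r.
  have hcv : c = v * r by rewrite /v mulfVK // gt_eqF.
  have hu : u = v * r * r by rewrite /u hcv.
  have v0 : 0 < v by rewrite /v divr_gt0.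
  have ua : u <= a by rewrite /u mulrC -ler_pdivlMr.
  have bv : b <= v.
    rewrite /v ler_pdivlMr //.
    move: rle2; rewrite ler_pdivlMr // => h.
    nra.
  have cu : c <= u by rewrite /u ler_peMr // ltW.
  have vc : v <= c by rewrite hcv ler_peMr // ?ltW // ltW.
  have Eu : E e c <= E e u by apply: hmin; rewrite in_itv /= ua andbT; exact: le_trans bc cu.
  have Ev : E e c <= E e v by apply: hmin; rewrite in_itv /= bv /=; exact: le_trans vc ca.
  have geo := F_geo _ _ c0 (ltW r1).
  rewrite -/u -/v in geo.
  rewrite !Ecomp in Eu Ev; try (exact: bc || exact: (le_trans bc cu) || exact: bv).
  have pos : 0 < v ^+ 2 * r * (r - 1) ^+ 2 * (r + 1).
    apply: mulr_gt0; last by lra.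
    apply: mulr_gt0; last by rewrite exprn_gt0 // subr_gt0.
    by apply: mulr_gt0 => //; rewrite exprn_gt0.
  have decomp : (F u - (F b + beta * (u - b)) + e * ((u - b) * (a - u))) +
     r * (F v - (F b + beta * (v - b)) + e * ((v - b) * (a - v))) -
     (1 + r) * (F c - (F b + beta * (c - b)) + e * ((c - b) * (a - c))) =
     (F u + r * F v - (1 + r) * F c) - e * (v ^+ 2 * r * (r - 1) ^+ 2 * (r + 1)).
    rewrite hu hcv; ring.
  have epos : 0 < e * (v ^+ 2 * r * (r - 1) ^+ 2 * (r + 1)) by apply: mulr_gt0.
  nra.
apply/ler_addgt0Pr => e' e'0.
have ab0 : 0 < a - b by rewrite subr_gt0.
set e := e' / (a - b) ^+ 3.
have e0 : 0 < e by rewrite divr_gt0 // exprn_gt0.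
have bq : b <= q by exact: ltW.
have hE := key e e0 q ltac:(by rewrite bq ltW).
rewrite Ecomp // in hE.
have hbeta : beta * (a - b) = F a - F b.
  rewrite /beta /Ft (max_l p0) (max_l (le_trans p0 (ltW ba))); field; exact: abn.
have h1 : 0 <= (a - b) * (F q - (F b + beta * (q - b)) + e * ((q - b) * (a - q))).
  by apply: mulr_ge0 => //; exact: ltW.
have h2 : (a - b) * (F q - (F b + beta * (q - b)) + e * ((q - b) * (a - q))) =
   (a - b) * F q - (a - b) * F b - (beta * (a - b)) * (q - b) + e * (a - b) * ((q - b) * (a - q)).
  by ring.
rewrite hbeta in h2.
have hX : (q - b) * (a - q) <= (a - b) ^+ 2.
  rewrite expr2; apply: ler_pM; rewrite ?subr_ge0 //; [exact: ltW | | ].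
  - by rewrite lerD2r; exact: ltW.
  - by rewrite lerD2l lerN2.
have h3 : e * (a - b) * ((q - b) * (a - q)) <= e'.
  have -> : e' = e * (a - b) * (a - b) ^+ 2 by rewrite /e; field; rewrite gt_eqF.
  by apply: ler_wpM2l => //; apply: mulr_ge0; exact: ltW.
rewrite /a /b in h1 h2 h3 *.
nra.
Qed.


Definition dF t := lim ((fun h => (F (t + h) - F t) / h) @ (0:R)^'+).

Lemma slope_mono t h1 h2 : 0 <= t -> 0 < h1 -> h1 <= h2 ->
  (F (t + h2) - F t) / h2 <= (F (t + h1) - F t) / h1.
Proof.
move=> t0 h10 h12.
have h20 : 0 < h2 by exact: lt_le_trans h12.
case: (eqVneq h1 h2) => [->//|hn].
have h12' : h1 < h2 by rewrite lt_neqAle hn.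
have H := F_conc t (t + h1) (t + h2) t0 ltac:(by rewrite ltrDl) ltac:(by rewrite ltrD2l).
rewrite ler_pdivrMr // mulrAC ler_pdivlMr //.
have e1 : t + h2 - (t + h1) = h2 - h1 by ring.
have e2 : t + h1 - t = h1 by ring.
have e3 : t + h2 - t = h2 by ring.
rewrite e1 e2 e3 in H.
nra.
Qed.

Lemma slope_bnd t h : 0 <= t -> 0 < h -> 0 <= (F (t + h) - F t) / h <= 1.
Proof.
move=> t0 h0.
have /andP[a b] := F_lip t (t + h) t0 ltac:(by rewrite lerDl ltW).
apply/andP; split; first by apply: divr_ge0 => //; exact: ltW.
by rewrite ler_pdivrMr // mul1r; move: b; rewrite addrAC subrr add0r.
Qed.


Lemma dF_cvg t : 0 <= t -> cvg ((fun h => (F (t + h) - F t) / h) @ (0:R)^'+).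
Proof.
move=> t0.
set Q := fun h => (F (t + h) - F t) / h.
have A1 : \forall x \near (0:R)^'+, {in `]0, x[%R &, {homo Q : m n /~ n <= m}}.
  apply: nearW => x h1 h2; rewrite !in_itv /= => /andP[h10 _] /andP[h20 _] h12.
  exact: slope_mono.
have A2 : \forall x \near (0:R)^'+, has_ubound [set Q y | y in `]0, x[].
  apply: nearW => x; exists 1 => y [h]; rewrite /= in_itv /= => /andP[h0 _] <-.
  by have /andP[] := slope_bnd _ _ t0 h0.
have H := (@nonincreasing_at_right_is_cvgr R Q 0 A1 A2). exact: H.
Qed.

Lemma dF_bnd t : 0 <= t -> 0 <= dF t <= 1.
Proof.
move=> t0; apply/andP; split.
- apply: limr_ge; first exact: dF_cvg.
  apply: filterS (@near_lt R 1 ltr01) => h [h0 _].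
  by have /andP[] := slope_bnd _ _ t0 h0.
- apply: limr_le; first exact: dF_cvg.
  apply: filterS (@near_lt R 1 ltr01) => h [h0 _].
  by have /andP[] := slope_bnd _ _ t0 h0.
Qed.

Lemma dF_ge_slope t h : 0 <= t -> 0 < h -> (F (t + h) - F t) / h <= dF t.
Proof.
move=> t0 h0; apply: limr_ge; first exact: dF_cvg.
apply: filterS (@near_lt R _ h0) => h' [h0' hh].
by apply: slope_mono => //; exact: ltW.
Qed.

Lemma dF_le_slope p t : 0 <= p -> p < t -> dF t <= (F t - F p) / (t - p).
Proof.
move=> p0 pt; have t0 : 0 <= t by exact: (le_trans p0 (ltW pt)).
apply: limr_le; first exact: dF_cvg.
apply: filterS (@near_lt R 1 ltr01) => h [h0 _].
have H := F_conc p t (t + h) p0 pt ltac:(by rewrite ltrDl).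
have e1 : t + h - t = h by ring.
rewrite e1 in H.
have tp : 0 < t - p by rewrite subr_gt0.
rewrite ler_pdivrMr // mulrAC ler_pdivlMr //.
nra.
Qed.

Lemma dF_anti t t' : 0 <= t -> t <= t' -> dF t' <= dF t.
Proof.
move=> t0 tt'; case: (eqVneq t t') => [->//|tn].
have lt : t < t' by rewrite lt_neqAle tn.
apply: (le_trans (dF_le_slope _ _ t0 lt)).
have := dF_ge_slope t (t' - t) t0; rewrite subr_gt0 => /(_ lt).
by rewrite [t + _]addrC subrK.
Qed.

Lemma dF_le_slope2 p q t : 0 <= p -> p < q -> q <= t -> dF t <= (F q - F p) / (q - p).
Proof.
move=> p0 pq qt; apply: le_trans (dF_le_slope _ _ p0 pq).
apply: dF_anti => //; exact: le_trans p0 (ltW pq).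
Qed.

End Conc.


Local Open Scope classical_set_scope.

Section Integ.
Variable R : realType.
Local Notation mu := (@lebesgue_measure R).

Lemma le_integral_nomeas (D : set R) (f g : R -> \bar R) :
  (forall x, D x -> (0 <= g x)%E) -> (forall x, D x -> (f x <= g x)%E) ->
  (\int[mu]_(x in D) f x <= \int[mu]_(x in D) g x)%E.
Proof.
move=> g0 fg.
rewrite integralE.
apply: (@le_trans _ _ (\int[mu]_(x in D) f^\+ x - 0)%E).
  by apply: leeB => //; apply: integral_ge0 => x _; exact: funeneg_ge0.
rewrite sube0.
rewrite [X in (X <= _)%E]ge0_integralE; last by move=> x _; exact: funepos_ge0.
rewrite [X in (_ <= X)%E]ge0_integralE //.
apply: le_ereal_sup => _ [h hh <-]; exists h => //= x.
apply: (le_trans (hh x)); rewrite /patch; case: ifP => // /set_mem Dx.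
by rewrite funeposE ge_max fg // g0.
Qed.


Lemma bathtub (x y : nat -> R) (n N : nat) : (n <= N)%N ->
  (forall j, 0 <= x j <= 1) -> (forall j, 0 <= y j) -> (forall j, y j.+1 <= y j) ->
  \sum_(0 <= j < N) x j <= n%:R ->
  \sum_(0 <= j < N) x j * y j <= \sum_(0 <= j < n) y j.
Proof.
move=> nN hx hy hyd hs.
have ymono : forall i j, (i <= j)%N -> y j <= y i.
  move=> i j /subnK <-; elim: (j - i)%N => [|k IH]; first by rewrite add0n.
  by rewrite addSn (le_trans (hyd _)).
set Y := y n.
have h1 : \sum_(0 <= j < n) x j * y j <=
    \sum_(0 <= j < n) y j + \sum_(0 <= j < n) (x j - 1) * Y.
  rewrite -big_split /=; apply: ler_sum_nat => j /andP[_ jn].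
  have := ymono j n (ltnW jn); have /andP[a b] := hx j; rewrite -/Y => c.
  nra.
have h2 : \sum_(n <= j < N) x j * y j <= \sum_(n <= j < N) x j * Y.
  apply: ler_sum_nat => j /andP[nj _].
  have := ymono n j nj; have /andP[a b] := hx j; rewrite -/Y => c.
  nra.
rewrite (big_cat_nat (leq0n n) nN) /=.
rewrite (big_cat_nat (leq0n n) nN) /= in hs.
have e1 : \sum_(0 <= j < n) (x j - 1) * Y = (\sum_(0 <= j < n) x j) * Y - n%:R * Y.
  rewrite -mulr_suml sumrB /= sumr_const_nat subn0 mulrBl mulr_natl //.
have e2 : \sum_(n <= j < N) x j * Y = (\sum_(n <= j < N) x j) * Y.
  by rewrite -mulr_suml.
rewrite e1 in h1; rewrite e2 in h2.
have Y0 : 0 <= Y by exact: hy.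
have hs' : 0 <= n%:R - (\sum_(0 <= i < n) x i + \sum_(n <= i < N) x i) by rewrite subr_ge0.
have H := mulr_ge0 hs' Y0.
nra.
Qed.


Lemma int_steps (h : R -> R) (c : nat -> R) (dl : R) : 0 < dl ->
  measurable_fun setT h -> (forall x, 0 <= h x) -> (forall i, 0 <= c i) ->
  (forall i x, i%:R * dl < x -> x <= i.+1%:R * dl -> h x <= c i) ->
  forall k, (\int[mu]_(x in `[0%R, (k%:R * dl)%R]) (h x)%:E <=
             (\sum_(0 <= i < k) c i * dl)%:E)%E.
Proof.
move=> dl0 mh h0 c0 hc; elim => [|k IH].
  by rewrite mul0r set_itv1 integral_set1 big_geq.
rewrite big_nat_recr //= EFinD.
have kk : k%:R * dl <= k.+1%:R * dl by rewrite ler_pM2r // ler_nat.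
have k0 : 0 <= k%:R * dl by rewrite mulr_ge0 // ltW.
rewrite (@itv_bndbnd_setU _ _ (BLeft 0) (BRight (k%:R * dl)) (BRight (k.+1%:R * dl)));
  [|by rewrite bnd_simp|by rewrite bnd_simp].
rewrite ge0_integral_setU //=.
- apply: leeD => //.
  apply: (@le_trans _ _ (\int[mu]_(x in `](k%:R * dl)%R, (k.+1%:R * dl)%R]) (cst (c k)%:E) x)%E).
    apply: ge0_le_integral => //.
    + by move=> x _; rewrite lee_fin.
    + by apply/measurable_EFinP; apply: measurable_funTS.
    + move=> x; rewrite /= in_itv /= => /andP[a b]; rewrite lee_fin; exact: hc.
  rewrite integral_cst //= lebesgue_measure_itv /= lte_fin.
  rewrite ltr_pM2r // ltr_nat ltnSn -EFinB -EFinM.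
  by rewrite lee_fin -mulrBl -natrB // subSnn mul1r.
- by apply/measurable_EFinP; apply: measurable_funTS.
- by move=> x _; rewrite lee_fin.
- rewrite disj_set2E; apply/eqP/seteqP; split => // x [].
  by rewrite /= !in_itv /= => /andP[_ a] /andP[b _]; move: (lt_le_trans b a); rewrite ltxx.
Qed.


Lemma natSmul (i : nat) (dl : R) : i.+1%:R * dl = i%:R * dl + dl.
Proof. by rewrite -addn1 natrD mulrDl mul1r. Qed.

Lemma main_bound (F G : R -> R) (a : R)
  (hF1 : forall x1 x2, 0 <= x1 -> x1 <= x2 -> 0 <= F x2 - F x1 <= x2 - x1)
  (hF2 : forall m r, 0 < m -> 1 <= r -> F (m * r) + r * F (m / r) <= (1 + r) * F m)
  (hG1 : forall x1 x2, 0 <= x1 -> x1 <= x2 -> 0 <= G x2 - G x1 <= x2 - x1)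
  (hG2 : forall m r, 0 < m -> 1 <= r -> G (m * r) + r * G (m / r) <= (1 + r) * G m) :
  0 <= a -> (forall x, 0 <= x -> F x <= a) -> F 0 = 0 -> G 0 = 0 ->
  (\int[mu]_(t in `[0%R, +oo[) (dF R F (Num.max t 0) * dF R G (Num.max t 0))%:E
     <= (G a)%:E)%E.
Proof.
move=> a0 Fa F0 G0.
set f := fun t => dF R F (Num.max t 0).
set g := fun t => dF R G (Num.max t 0).
have mx0 (t : R) : 0 <= Num.max t 0 by rewrite le_max lexx orbT.
have mxm (t t' : R) : t <= t' -> Num.max t 0 <= Num.max t' 0.
  by move=> tt; rewrite ge_max !le_max lexx tt orbT.
have fb (t : R) : 0 <= f t <= 1 by exact: (@dF_bnd R F hF1 hF2 _ (mx0 t)).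
have gb (t : R) : 0 <= g t <= 1 by exact: (@dF_bnd R G hG1 hG2 _ (mx0 t)).
have fm : nonincreasing_fun f.
  by move=> t t' tt; exact: (@dF_anti R F hF1 hF2 _ _ (mx0 t) (mxm _ _ tt)).
have gm : nonincreasing_fun g.
  by move=> t t' tt; exact: (@dF_anti R G hG1 hG2 _ _ (mx0 t) (mxm _ _ tt)).
have mf : measurable_fun setT f := nonincreasing_measurable measurableT fm.
have mg : measurable_fun setT g := nonincreasing_measurable measurableT gm.
have mfg : measurable_fun setT (fun t => f t * g t) := measurable_funM mf mg.
have fg0 (t : R) : 0 <= f t * g t.
  by have /andP[? _] := fb t; have /andP[? _] := gb t; apply: mulr_ge0.
rewrite (@ge0_integral_ereal_sup R mu (fun t => f t * g t) fg0 mfg).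
apply: ge_ereal_sup => _ [j _ <-].
apply/lee_addgt0Pr => e e0.
set dl := e / 2.
have dl0 : 0 < dl by rewrite divr_gt0.
set n := (Num.trunc (a / dl)).+1.
set M := Num.trunc (j.+1%:R / dl).
set N' := (n + M)%N.
have adl : 0 <= a / dl by rewrite divr_ge0 // ltW.
have jdl : 0 <= j.+1%:R / dl by rewrite divr_ge0 // ltW.
have /andP[tr1 tr2] := trunc_itv adl.
have /andP[_ tr4] := trunc_itv jdl.
have hjN : j.+1%:R <= N'.+1%:R * dl.
  have : j.+1%:R < M.+1%:R * dl by rewrite -ltr_pdivrMr.
  move/ltW/le_trans; apply; rewrite ler_pM2r // ler_nat ltnS /N' leq_addl //.
apply: (@le_trans _ _ (\int[mu]_(x in `[0%R, (N'.+1%:R * dl)%R]) (f x * g x)%:E)%E).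
  apply: ge0_subset_integral => //.
  - by apply/measurable_EFinP; apply: measurable_funTS.
  - by move=> x _; rewrite lee_fin.
  - by apply: subset_itvl; rewrite bnd_simp.
set sf := fun i : nat => (F (i.+1%:R * dl) - F (i%:R * dl)) / dl.
set sg := fun i : nat => (G (i.+1%:R * dl) - G (i%:R * dl)) / dl.
have idl0 (i : nat) : 0 <= i%:R * dl by rewrite mulr_ge0 // ltW.
have idlS (i : nat) : i%:R * dl <= i.+1%:R * dl by rewrite natSmul lerDl ltW.
have sfb i : 0 <= sf i <= 1.
  have /andP[u v] := hF1 _ _ (idl0 i) (idlS i).
  have ed : i.+1%:R * dl - i%:R * dl = dl by rewrite natSmul; ring.
  rewrite ed in v.
  apply/andP; split; first by apply: divr_ge0 => //; exact: ltW.
  by rewrite /sf ler_pdivrMr // mul1r.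
have sgb i : 0 <= sg i.
  have /andP[u v] := hG1 _ _ (idl0 i) (idlS i).
  by apply: divr_ge0 => //; exact: ltW.
have sgd i : sg i.+1 <= sg i.
  have H := @F_conc R G hG1 hG2 (i%:R * dl) (i.+1%:R * dl) (i.+2%:R * dl) (idl0 i)
    ltac:(by rewrite natSmul ltrDl) ltac:(by rewrite [i.+2%:R * _]natSmul ltrDl).
  rewrite /sg ler_pdivrMr // divfK ?gt_eqF //.
  move: H; rewrite [i.+2%:R * _]natSmul [i.+1%:R * _]natSmul.
  have e1 : i%:R * dl + dl + dl - (i%:R * dl + dl) = dl by ring.
  have e2 : i%:R * dl + dl - i%:R * dl = dl by ring.
  have e3 : i%:R * dl + dl + dl - i%:R * dl = 2 * dl by ring.
  rewrite e1 e2 e3 => H; nra.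
set c := fun i : nat => if i is i'.+1 then sf i' * sg i' else 1.
have c0 i : 0 <= c i.
  case: i => [|i] /=; first exact: ler01.
  by apply: mulr_ge0; [case/andP: (sfb i)|exact: sgb].
have hc i x : i%:R * dl < x -> x <= i.+1%:R * dl -> f x * g x <= c i.
  move=> h1 h2; have x0 : 0 < x by exact: le_lt_trans (idl0 i) h1.
  have /andP[fx0 fx1] := fb x; have /andP[gx0 gx1] := gb x.
  case: i h1 h2 => [|i] h1 h2 /=; first by rewrite mulr_ile1.
  have ff : f x <= sf i.
    rewrite /f (max_l (ltW x0)) /sf.
    have := @dF_le_slope2 R F hF1 hF2 (i%:R * dl) (i.+1%:R * dl) x (idl0 i)
      ltac:(by rewrite natSmul ltrDl) (ltW h1).
    by rewrite natSmul addrAC subrr add0r -natSmul.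
  have gg : g x <= sg i.
    rewrite /g (max_l (ltW x0)) /sg.
    have := @dF_le_slope2 R G hG1 hG2 (i%:R * dl) (i.+1%:R * dl) x (idl0 i)
      ltac:(by rewrite natSmul ltrDl) (ltW h1).
    by rewrite natSmul addrAC subrr add0r -natSmul.
  by apply: ler_pM.
apply: (le_trans (int_steps (fun t => f t * g t) c dl dl0 mfg fg0 c0 hc N'.+1)).
rewrite lee_fin big_nat_recl //= mul1r.
have bt := @bathtub sf sg n N' (leq_addr _ _) sfb sgb sgd.
have ssf : \sum_(0 <= i < N') sf i <= n%:R.
  rewrite -mulr_suml.
  have -> : \sum_(0 <= i < N') (F (i.+1%:R * dl) - F (i%:R * dl)) = F (N'%:R * dl) - F (0%:R * dl).
    by rewrite (telescope_sumr (fun i => F (i%:R * dl))).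
  rewrite mul0r F0 subr0 ler_pdivrMr //.
  apply: (le_trans (Fa _ (idl0 _))).
  by rewrite -ler_pdivrMr // ltW.
have {bt ssf}bt := bt ssf.
have e1 : \sum_(0 <= i < N') sf i * sg i * dl = (\sum_(0 <= i < N') sf i * sg i) * dl.
  by rewrite mulr_suml.
have e2 : (\sum_(0 <= i < n) sg i) * dl = G (n%:R * dl).
  rewrite mulr_suml.
  have -> : \sum_(0 <= i < n) sg i * dl = \sum_(0 <= i < n) (G (i.+1%:R * dl) - G (i%:R * dl)).
    by apply: eq_bigr => i _; rewrite /sg divfK // gt_eqF.
  by rewrite (telescope_sumr (fun i => G (i%:R * dl))) // mul0r G0 subr0.
rewrite e1.
have h3 : (\sum_(0 <= i < N') sf i * sg i) * dl <= G (n%:R * dl).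
  by rewrite -e2 ler_pM2r.
have anl : a <= n%:R * dl by rewrite -ler_pdivrMr // ltW.
have anu : n%:R * dl <= a + dl.
  by rewrite /n natSmul lerD2r -ler_pdivlMr.
have /andP[_ hGa] := hG1 _ _ a0 anl.
have ee : e = dl + dl by rewrite /dl; field.
lra.
Qed.

End Integ.


Section M2.
Variable R : realType.
Variable L : R -> R -> R.
Hypothesis hL : in_M2 L.

Lemma M2_lip y : 0 <= y -> forall x1 x2, 0 <= x1 -> x1 <= x2 ->
  0 <= L x2 y - L x1 y <= x2 - x1.
Proof.
move=> y0 x1 x2 h1 h2; case: hL => D [hD hlim].
exact: (@L_lip R L D hD hlim x1 x2 y h1 h2 y0).
Qed.

Lemma M2_bnd x y : 0 <= x -> 0 <= y -> 0 <= L x y <= y.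
Proof. by move=> x0 y0; case: hL => D [hD hlim]; exact: (@L_bnd R L D hD hlim). Qed.

Lemma M2_0 y : 0 <= y -> L 0 y = 0.
Proof. by move=> y0; case: hL => D [hD hlim]; exact: (@L_0 R L D hD hlim). Qed.

Lemma M2_geo y : 0 <= y -> forall m r, 0 < m -> 1 <= r ->
  L (m * r) y + r * L (m / r) y <= (1 + r) * L m y.
Proof.
move=> y0 m r m0 r1; case: hL => D [hD hlim].
have r0 : 0 < r by exact: lt_le_trans ltr01 r1.
have H := @L_supermod R L D hD hlim m (m * r) y (r * y) (ltW m0)
  ltac:(by rewrite ler_peMr // ltW) y0 ltac:(by rewrite ler_peMl).
have e1 : L (m * r) (r * y) = r * L m y.
  by rewrite mulrC (@L_hom R L D hlim) // ltW.
have e2 : L m (r * y) = r * L (m / r) y.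
  rewrite -{1}(divfK (lt0r_neq0 r0) m) mulrC (@L_hom R L D hlim) //.
  by rewrite divr_ge0 // ltW.
rewrite e1 e2 in H; lra.
Qed.

Lemma M2_d1_bnd y t : 0 <= y -> 0 <= t -> 0 <= d1 L t y <= 1.
Proof.
move=> y0 t0.
exact: (@dF_bnd R (fun x => L x y) (M2_lip _ y0) (M2_geo _ y0) t t0).
Qed.

End M2.
Arguments M2_lip {R L} hL y.
Arguments M2_geo {R L} hL y.
Arguments M2_bnd {R L} hL x y.
Arguments M2_0 {R L} hL y.
Arguments M2_d1_bnd {R L} hL y t.

Theorem mainTheorem5 (R : realType) (d : nat) (hd : (2 <= d)%N)
  (Ls : 'I_d -> R -> R -> R) (hL : forall i, in_M2 (Ls i))
  (C : ('I_d -> R) -> R) (hC : is_copula C)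
  (hNQD : forall u : 'I_d -> R, in_unit_cube u -> C u <= Pi_cop u)
  (k : 'I_d) (w : 'I_d -> R) (hw : forall i, 0 <= w i) :
  (phi C Ls w <= phi (@Pi_cop R d) Ls w)%E /\
  (phi (@Pi_cop R d) Ls w <=
     \big[Order.min/+oo%E]_(m < d | m != k) (Ls k (w m) (w k))%:E)%E.
Proof.
have ub i t : 0 <= t -> 0 <= d1 (Ls i) t (w i) <= 1.
  by move=> t0; apply: (M2_d1_bnd (hL i)).
have Dt (t : R) : `[0%R, +oo[%classic t -> 0 <= t.
  by rewrite /= in_itv /= andbT.
have Pi0 t : 0 <= t -> 0 <= Pi_cop (fun i => d1 (Ls i) t (w i)).
  move=> t0; rewrite /Pi_cop; apply: prodr_ge0 => i _.
  by case/andP: (ub i t t0).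
split.
  rewrite /phi; apply: le_integral_nomeas => t /Dt t0.
    by rewrite lee_fin Pi0.
  rewrite lee_fin; apply: hNQD => i; exact: ub.
apply: le_bigmin; first by rewrite leey.
move=> m mk.
have hm := hL m; have hk := hL k.
apply: le_trans; last first.
  apply: (@main_bound R (fun x => Ls m x (w m)) (fun x => Ls k x (w k)) (w m)
    (M2_lip hm _ (hw m)) (M2_geo hm _ (hw m)) (M2_lip hk _ (hw k)) (M2_geo hk _ (hw k)) (hw m)).
  - by move=> x x0; case/andP: (M2_bnd hm _ _ x0 (hw m)).
  - exact: (M2_0 hm _ (hw m)).
  - exact: (M2_0 hk _ (hw k)).
rewrite /phi; apply: le_integral_nomeas => t /Dt t0.
  rewrite lee_fin (max_l t0); apply: mulr_ge0.
  - by case/andP: (ub m t t0).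
  - by case/andP: (ub k t t0).
rewrite lee_fin (max_l t0) /Pi_cop (bigD1 m) //= (bigD1 k) /=; last by rewrite eq_sym.
have [um0 um1] := andP (ub m t t0).
have [uk0 uk1] := andP (ub k t t0).
apply: ler_wpM2l => //.
apply: ler_piMr => //.
apply: prodr_ile1 => i _; exact: ub.
Qed.
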